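(* If $f(z)=\sum_{k=1}^\infty b_k z^k$ is analytic in $\mathbb{D}$ with $\|f\|_{\mathcal{B}}\le 1$, then $$ \sum_{k=1}^n k|b_k|^2\le \frac{n^n}{(n-1)^{n-1}} \quad\text{for all } n\ge 2. $$ Moreover, $$ \frac{32}{27}\, nB_n^2\le \frac{n^n}{(n-1)^{n-1}}\le \frac{4}{e}\, nB_n^2 \quad\text{for all } n\ge 2. $$
   Context: $\mathbb{D}$ is the open unit disc. The Bloch space $\mathcal{B}$ consists of analytic functions $f$ on $\mathbb{D}$ with finite norm $\|f\|_{\mathcal{B}}=|f(0)|+\sup_{z\in\mathbb{D}}(1-|z|^2)|f'(z)|$. For $n\ge 2$, $B_n=\frac{n+1}{2n}\left(\frac{n+1}{n-1}\right)^{(n-1)/2}$. *)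

(* Defs.v *)
From Stdlib Require Import Reals.
From Coquelicot Require Import Coquelicot.
Open Scope R_scope.

Definition Bn (n : nat) : R :=
  (INR n + 1) / (2 * INR n) * Rpower ((INR n + 1) / (INR n - 1)) ((INR n - 1) / 2).

Definition Qn (n : nat) : R := INR n ^ n / (INR n - 1) ^ (n - 1).

Definition in_disc (z : C) : Prop := Cmod z < 1.

(* ||f||_B <= 1, with the sup written out pointwise:
   |f(0)| + (1-|z|^2)|f'(z)| <= 1 for all z in D, f' the complex derivative. *)
Definition bloch_norm_le1 (f : C -> C) : Prop :=
  forall z : C, in_disc z ->
    exists l : C, is_derive (K := C_AbsRing) (V := C_NormedModule) f z l /\
      Cmod (f 0%C) + (1 - Cmod z ^ 2) * Cmod l <= 1.

(* Main.v *)
Require Import Defs.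
From Stdlib Require Import Reals Lra Lia.
From Coquelicot Require Import Coquelicot.
Open Scope R_scope.

Fixpoint ssum (g : nat -> R) (n : nat) : R :=
  match n with O => 0 | S n' => ssum g n' + g n' end.

Lemma ssum_ext g h n : (forall k, (k < n)%nat -> g k = h k) -> ssum g n = ssum h n.
Proof. induction n; simpl; intros H; auto. rewrite IHn by (intros; apply H; lia). rewrite H by lia. auto. Qed.

Lemma ssum_plus g h n : ssum (fun k => g k + h k) n = ssum g n + ssum h n.
Proof. induction n; simpl; [lra|]. rewrite IHn; lra. Qed.

Lemma ssum_scal c g n : ssum (fun k => c * g k) n = c * ssum g n.
Proof. induction n; simpl; [lra|]. rewrite IHn; lra. Qed.

Lemma ssum_le g h n : (forall k, (k < n)%nat -> g k <= h k) -> ssum g n <= ssum h n.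
Proof. induction n; simpl; intros H; [lra|]. pose proof (H n ltac:(lia)). assert (ssum g n <= ssum h n) by (apply IHn; intros; apply H; lia). lra. Qed.

Lemma ssum_nonneg g n : (forall k, (k < n)%nat -> 0 <= g k) -> 0 <= ssum g n.
Proof. intros H. replace 0 with (ssum (fun _ => 0) n). apply ssum_le; auto. induction n; simpl; auto. rewrite IHn; [lra|]. intros; apply H; lia. Qed.

Lemma ssum_mono_n g m n : (forall k, 0 <= g k) -> (m <= n)%nat -> ssum g m <= ssum g n.
Proof. intros H Hmn. induction Hmn; [lra|]. simpl. pose proof (H m0). lra. Qed.

Lemma ssum_const c n : ssum (fun _ => c) n = INR n * c.
Proof. induction n; [simpl; lra|]. cbn [ssum]. rewrite IHn, S_INR. lra. Qed.

Lemma ssum_swap (g : nat -> nat -> R) n m :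
  ssum (fun i => ssum (fun j => g i j) m) n = ssum (fun j => ssum (fun i => g i j) n) m.
Proof. induction n; simpl.
- induction m; simpl; auto. rewrite <- IHm. lra.
- rewrite IHn. rewrite <- ssum_plus. reflexivity. Qed.

Lemma ssum_delta g k n : (k < n)%nat -> ssum (fun l => if Nat.eqb l k then g l else 0) n = g k.
Proof. induction n; intros H; [lia|]. simpl. destruct (Nat.eq_dec k n).
- subst. rewrite Nat.eqb_refl. replace (ssum _ n) with 0. lra.
  clear. assert (forall m, (m <= n)%nat -> 0 = ssum (fun l => if (l =? n)%nat then g l else 0) m).
  { induction m; simpl; auto. intros. rewrite <- IHm by lia. destruct (Nat.eqb_spec m n); [lia|]. lra. }
  apply H; lia.
- destruct (Nat.eqb_spec n k); [lia|]. rewrite IHn by lia. lra. Qed.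

Lemma trig_sums N m : (0 < m < N)%nat ->
  let x := 2 * PI * INR m / INR N in
  ssum (fun j => cos (INR j * x)) N = 0 /\ ssum (fun j => sin (INR j * x)) N = 0.
Proof.
  intros Hm x.
  assert (HN : 0 < INR N) by (apply lt_0_INR; lia).
  assert (Hmm : 0 < INR m) by (apply lt_0_INR; lia).
  assert (HmN : INR m < INR N) by (apply lt_INR; lia).
  set (s := sin (x / 2)).
  assert (Hs : 0 < s).
  { unfold s, x. apply sin_gt_0.
    - pose proof PI_RGT_0. apply Rmult_lt_0_compat; [|lra]. unfold Rdiv. apply Rmult_lt_0_compat; [nra|]. apply Rinv_0_lt_compat; lra.
    - pose proof PI_RGT_0. replace (2 * PI * INR m / INR N / 2) with (PI * (INR m / INR N)) by (field; lra).
      assert (INR m / INR N < 1). { apply (Rmult_lt_reg_r (INR N)); auto. field_simplify; lra. }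
      nra. }
  assert (HNx : INR N * x = 2 * INR m * PI) by (unfold x; field; lra).
  assert (E1 : forall n, 2 * s * ssum (fun j => cos (INR j * x)) n = sin ((INR n - 1/2) * x) + s).
  { induction n; cbn [ssum]; [change (INR 0) with 0|].
    - replace ((0 - 1/2) * x) with (- (x/2)) by lra. rewrite sin_neg. unfold s. lra.
    - rewrite Rmult_plus_distr_l, IHn. rewrite S_INR.
      replace ((INR n + 1 - 1/2) * x) with (INR n * x + x/2) by lra.
      replace ((INR n - 1/2) * x) with (INR n * x - x/2) by lra.
      rewrite sin_plus, sin_minus. unfold s. lra. }
  assert (E2 : forall n, 2 * s * ssum (fun j => sin (INR j * x)) n = cos (x/2) - cos ((INR n - 1/2) * x)).
  { induction n; cbn [ssum]; [change (INR 0) with 0|].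
    - replace ((0 - 1/2) * x) with (- (x/2)) by lra. rewrite cos_neg. lra.
    - rewrite Rmult_plus_distr_l, IHn. rewrite S_INR.
      replace ((INR n + 1 - 1/2) * x) with (INR n * x + x/2) by lra.
      replace ((INR n - 1/2) * x) with (INR n * x - x/2) by lra.
      rewrite cos_plus, cos_minus. unfold s. lra. }
  assert (HNX : (INR N - 1/2) * x = - (x/2) + 2 * INR m * PI) by lra.
  split.
  - specialize (E1 N). rewrite HNX, sin_period, sin_neg in E1. fold s in E1.
    apply (Rmult_eq_reg_l (2 * s)); [|lra]. lra.
  - specialize (E2 N). rewrite HNX, cos_period, cos_neg in E2.
    apply (Rmult_eq_reg_l (2 * s)); [|lra]. lra.
Qed.

Lemma ssum_mul a b n m : ssum a n * ssum b m = ssum (fun k => ssum (fun l => a k * b l) m) n.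
Proof.
  induction n; cbn [ssum]; [lra|]. rewrite <- IHn. rewrite ssum_scal. lra.
Qed.

Lemma trig_sums2 N k l : (k < N)%nat -> (l < N)%nat ->
  ssum (fun j => cos ((INR (S k) * (INR j * (2*PI/INR N))) - (INR (S l) * (INR j * (2*PI/INR N))))) N
     = (if Nat.eqb k l then INR N else 0) /\
  ssum (fun j => sin ((INR (S k) * (INR j * (2*PI/INR N))) - (INR (S l) * (INR j * (2*PI/INR N))))) N = 0.
Proof.
  intros Hk Hl.
  assert (HN : 0 < INR N) by (apply lt_0_INR; lia).
  destruct (Nat.eqb_spec k l).
  - subst. split.
    + rewrite (ssum_ext _ (fun _ => 1)). rewrite ssum_const. lra.
      intros. rewrite Rminus_diag. apply cos_0.
    + rewrite (ssum_ext _ (fun _ => 0)). rewrite ssum_const. lra.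
      intros. rewrite Rminus_diag. apply sin_0.
  - destruct (Nat.lt_ge_cases l k) as [Hlk|Hlk].
    + destruct (trig_sums N (k - l) ltac:(lia)) as [C S]. split.
      * rewrite <- C. apply ssum_ext. intros j _. f_equal. rewrite minus_INR by lia. rewrite !S_INR. field. lra.
      * rewrite <- S. apply ssum_ext. intros j _. f_equal. rewrite minus_INR by lia. rewrite !S_INR. field. lra.
    + destruct (trig_sums N (l - k) ltac:(lia)) as [C S]. split.
      * rewrite <- C. apply ssum_ext. intros j _. rewrite <- cos_neg. f_equal. rewrite minus_INR by lia. rewrite !S_INR. field. lra.
      * rewrite <- (Rmult_0_r (-1)), <- S, <- ssum_scal. apply ssum_ext. intros j _.
        replace (-1 * sin (INR j * (2 * PI * INR (l - k) / INR N))) with (sin (- (INR j * (2 * PI * INR (l - k) / INR N)))) by (rewrite sin_neg; ring).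
        f_equal. rewrite minus_INR by lia. rewrite !S_INR. field. lra.
Qed.

Definition XN p q rho N phi := ssum (fun k => (p k * cos (INR (S k) * phi) - q k * sin (INR (S k) * phi)) * rho^k) N.
Definition YN p q rho N phi := ssum (fun k => (p k * sin (INR (S k) * phi) + q k * cos (INR (S k) * phi)) * rho^k) N.

Lemma parseval_discrete p q rho N : (0 < N)%nat ->
  ssum (fun j => (XN p q rho N (INR j * (2*PI/INR N)))^2 + (YN p q rho N (INR j * (2*PI/INR N)))^2) N
  = INR N * ssum (fun k => (p k ^2 + q k ^2) * rho^(2*k)) N.
Proof.
  intros HN.
  set (th := fun j => INR j * (2*PI/INR N)).
  set (T := fun k l j => rho^k * rho^l * ((p k * p l + q k * q l) * cos (INR (S k) * th j - INR (S l) * th j)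
                      + (p k * q l - q k * p l) * sin (INR (S k) * th j - INR (S l) * th j))).
  transitivity (ssum (fun j => ssum (fun k => ssum (fun l => T k l j) N) N) N).
  { apply ssum_ext. intros j _. unfold XN, YN. rewrite <- !Rsqr_pow2. unfold Rsqr. rewrite !ssum_mul, <- ssum_plus.
    apply ssum_ext. intros k _. rewrite <- ssum_plus. apply ssum_ext. intros l _. unfold T.
    rewrite cos_minus, sin_minus. unfold th. ring. }
  rewrite ssum_swap. rewrite <- ssum_scal. apply ssum_ext. intros k Hk.
  rewrite ssum_swap.
  transitivity (ssum (fun l => if Nat.eqb l k then INR N * ((p k ^ 2 + q k ^ 2) * rho ^ (2 * k)) else 0) N).
  2:{ apply ssum_delta; auto. }
  apply ssum_ext. intros l Hl. unfold T.
  rewrite (ssum_ext _ (fun j => (rho ^ k * rho ^ l * (p k * p l + q k * q l)) * cos (INR (S k) * th j - INR (S l) * th j) + (rho ^ k * rho ^ l * (p k * q l - q k * p l)) * sin (INR (S k) * th j - INR (S l) * th j))) by (intros; ring).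
  rewrite ssum_plus.
  rewrite !ssum_scal. unfold th. destruct (trig_sums2 N k l Hk Hl) as [C S]. rewrite C, S.
  destruct (Nat.eqb_spec k l), (Nat.eqb_spec l k); try lia.
  - subst. replace (2*l)%nat with (l+l)%nat by lia. rewrite pow_add. ring.
  - ring.
Qed.

Lemma sum_n_ssum (a : nat -> R) n : sum_n a n = ssum a (S n).
Proof. induction n.
- rewrite sum_O. simpl. lra.
- rewrite sum_Sn, IHn. reflexivity. Qed.

Lemma is_series_ssum (a : nat -> R) l : is_series a l -> is_lim_seq (fun n => ssum a n) l.
Proof. intros H. apply is_lim_seq_incr_1.
  apply (is_lim_seq_ext (sum_n a)). intros; apply sum_n_ssum. exact H. Qed.

Lemma ssum_diff_bound (t a : nat -> R) N m : (forall k, Rabs (t k) <= a k) -> (N <= m)%nat ->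
  Rabs (ssum t m - ssum t N) <= ssum a m - ssum a N.
Proof. intros Ht Hm. induction Hm.
- rewrite Rminus_diag, Rabs_R0. lra.
- cbn [ssum]. pose proof (Ht m). 
  replace (ssum t m + t m - ssum t N) with ((ssum t m - ssum t N) + t m) by ring.
  eapply Rle_trans. apply Rabs_triang. lra. Qed.

Lemma tail_bound (t a : nat -> R) X Sa N : (forall k, Rabs (t k) <= a k) ->
  is_series t X -> is_series a Sa -> Rabs (X - ssum t N) <= Sa - ssum a N.
Proof.
  intros Ht HX HS.
  apply is_series_ssum in HX. apply is_series_ssum in HS.
  assert (L1 : is_lim_seq (fun m => Rabs (ssum t m - ssum t N)) (Rabs (X - ssum t N))).
  { apply (is_lim_seq_abs _ (Finite (X - ssum t N))). apply is_lim_seq_minus'; auto. apply is_lim_seq_const. }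
  assert (L2 : is_lim_seq (fun m => ssum a m - ssum a N) (Sa - ssum a N)).
  { apply is_lim_seq_minus'; auto. apply is_lim_seq_const. }
  pose proof (is_lim_seq_le_loc _ _ _ _ (ex_intro _ N (fun m Hm => ssum_diff_bound t a N m Ht Hm)) L1 L2) as H.
  exact H.
Qed.

Lemma le_eps_le s m c : 0 <= c -> (forall eps, 0 < eps -> s <= m + eps * c + 2 * eps ^ 2) -> s <= m.
Proof.
  intros Hc H. destruct (Rle_or_lt s m) as [|Hlt]; auto. exfalso.
  set (e := Rmin 1 ((s - m) / (c + 3))).
  assert (He : 0 < e). { unfold e. apply Rmin_glb_lt; [lra|]. apply Rdiv_lt_0_compat; lra. }
  assert (He1 : e <= 1) by apply Rmin_l.
  assert (He2 : e * (c + 3) <= s - m).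
  { unfold e. pose proof (Rmin_r 1 ((s - m) / (c + 3))). 
    replace (s - m) with ((s - m) / (c + 3) * (c + 3)) at 2 by (field; lra). apply Rmult_le_compat_r; lra. }
  specialize (H e He). nra.
Qed.

Lemma parseval p q rho M : 0 <= rho -> 0 <= M ->
  ex_series (fun k => (Rabs (p k) + Rabs (q k)) * rho^k) ->
  (forall phi, exists X Y,
     is_series (fun k => (p k * cos (INR (S k) * phi) - q k * sin (INR (S k) * phi)) * rho^k) X /\
     is_series (fun k => (p k * sin (INR (S k) * phi) + q k * cos (INR (S k) * phi)) * rho^k) Y /\
     X^2 + Y^2 <= M^2) ->
  forall K, ssum (fun k => (p k ^2 + q k ^2) * rho^(2*k)) K <= M^2.
Proof.
  intros Hrho HM [Sa HSa] H K.
  set (a := fun k => (Rabs (p k) + Rabs (q k)) * rho ^ k) in *.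
  apply (le_eps_le _ _ (4 * M)); [lra|]. intros eps Heps.
  pose proof (is_series_ssum _ _ HSa) as La.
  apply is_lim_seq_spec in La. destruct (La (mkposreal eps Heps)) as [N0 HN0]. simpl in HN0.
  set (N := S (max N0 K)).
  assert (HNpos : (0 < N)%nat) by (unfold N; lia).
  assert (Ha_nonneg : forall k, 0 <= a k).
  { intros k. unfold a. apply Rmult_le_pos. pose proof (Rabs_pos (p k)); pose proof (Rabs_pos (q k)); lra. apply pow_le; auto. }
  assert (Htail : Sa - ssum a N <= eps).
  { specialize (HN0 N ltac:(unfold N; lia)). apply Rabs_lt_between in HN0. lra. }
  assert (Hbnd : forall t : nat -> R, (forall k, Rabs (t k) <= a k) -> forall X, is_series t X ->
            Rabs (ssum t N) <= Rabs X + eps).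
  { intros t Ht X HX. pose proof (tail_bound t a X Sa N Ht HX HSa).
    pose proof (Rabs_triang_inv X (ssum t N)). pose proof (Rabs_triang_inv (ssum t N) X). rewrite Rabs_minus_sym in H0. 
    pose proof (Rabs_minus_sym X (ssum t N)). lra. }
  assert (Hpt : forall phi, (XN p q rho N phi)^2 + (YN p q rho N phi)^2 <= M^2 + eps * (4 * M) + 2 * eps ^ 2).
  { intros phi. destruct (H phi) as (X & Y & HX & HY & HXY).
    assert (B1 : Rabs (XN p q rho N phi) <= Rabs X + eps).
    { unfold XN. apply (Hbnd _) with (X:=X); [|exact HX]. intros k; unfold a; rewrite Rabs_mult, (Rabs_pos_eq (rho^k)) by (apply pow_le; auto).
          apply Rmult_le_compat_r; [apply pow_le; auto|].
          eapply Rle_trans; [apply Rabs_triang|]; rewrite Rabs_Ropp, !Rabs_mult.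
          pose proof (COS_bound (INR (S k) * phi)); pose proof (SIN_bound (INR (S k) * phi)).
          assert (Rabs (cos (INR (S k) * phi)) <= 1) by (apply Rabs_le; lra).
          assert (Rabs (sin (INR (S k) * phi)) <= 1) by (apply Rabs_le; lra).
          pose proof (Rabs_pos (p k)); pose proof (Rabs_pos (q k)); nra. }
    assert (B2 : Rabs (YN p q rho N phi) <= Rabs Y + eps).
    { unfold YN. apply (Hbnd _) with (X:=Y); [|exact HY]. intros k; unfold a; rewrite Rabs_mult, (Rabs_pos_eq (rho^k)) by (apply pow_le; auto).
          apply Rmult_le_compat_r; [apply pow_le; auto|].
          eapply Rle_trans; [apply Rabs_triang|]; rewrite !Rabs_mult.
          pose proof (COS_bound (INR (S k) * phi)); pose proof (SIN_bound (INR (S k) * phi)).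
          assert (Rabs (cos (INR (S k) * phi)) <= 1) by (apply Rabs_le; lra).
          assert (Rabs (sin (INR (S k) * phi)) <= 1) by (apply Rabs_le; lra).
          pose proof (Rabs_pos (p k)); pose proof (Rabs_pos (q k)); nra. }
    assert (AX : Rabs X <= M). { pose proof (pow2_ge_0 Y). apply Rabs_le; split; nra. }
    assert (AY : Rabs Y <= M). { pose proof (pow2_ge_0 X). apply Rabs_le; split; nra. }
    rewrite <- (pow2_abs (XN p q rho N phi)), <- (pow2_abs (YN p q rho N phi)).
    pose proof (Rabs_pos (XN p q rho N phi)). pose proof (Rabs_pos (YN p q rho N phi)).
    pose proof (Rabs_pos X). pose proof (Rabs_pos Y).
    rewrite <- (pow2_abs X), <- (pow2_abs Y) in HXY. nra. }
  assert (Hsum : INR N * ssum (fun k => (p k ^2 + q k ^2) * rho^(2*k)) N <= INR N * (M^2 + eps * (4 * M) + 2 * eps ^ 2)).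
  { rewrite <- parseval_discrete by auto. rewrite Rmult_comm, <- ssum_const. apply ssum_le. intros; apply Hpt. }
  assert (HN : 0 < INR N) by (apply lt_0_INR; auto).
  apply Rmult_le_reg_l in Hsum; auto.
  eapply Rle_trans; [|exact Hsum]. apply ssum_mono_n; [|unfold N; lia].
  intros k. apply Rmult_le_pos. pose proof (pow2_ge_0 (p k)); pose proof (pow2_ge_0 (q k)); lra. apply pow_le; auto.
Qed.

Definition polar (t phi : R) : C := (t * cos phi, t * sin phi).

Lemma Cmod_polar t phi : Cmod (polar t phi) = Rabs t.
Proof. unfold Cmod, polar. cbn [fst snd].
  replace ((t * cos phi) ^ 2 + (t * sin phi) ^ 2) with (Rsqr t).
  - apply sqrt_Rsqr_abs.
  - pose proof (sin2_cos2 phi). unfold Rsqr in *. nra. Qed.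

Lemma pow_polar t phi k : pow_n (K:=C_AbsRing) (polar t phi) k = polar (t ^ k) (INR k * phi).
Proof. induction k.
- unfold polar. simpl. rewrite Rmult_0_l, cos_0, sin_0. apply injective_projections; simpl; ring.
- change (pow_n (K:=C_AbsRing) (polar t phi) (S k)) with (Cmult (polar t phi) (pow_n (K:=C_AbsRing) (polar t phi) k)).
  rewrite IHk. unfold polar. rewrite S_INR. replace ((INR k + 1) * phi) with (phi + INR k * phi) by ring.
  rewrite cos_plus, sin_plus. apply injective_projections; simpl; ring. Qed.

Lemma sum_n_fst (a : nat -> C) n : fst (sum_n (G:=C_AbelianMonoid) a n) = sum_n (fun k => fst (a k)) n.
Proof. induction n. - rewrite !sum_O. reflexivity.
- rewrite !sum_Sn. rewrite <- IHn. reflexivity. Qed.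
Lemma sum_n_snd (a : nat -> C) n : snd (sum_n (G:=C_AbelianMonoid) a n) = sum_n (fun k => snd (a k)) n.
Proof. induction n. - rewrite !sum_O. reflexivity.
- rewrite !sum_Sn. rewrite <- IHn. reflexivity. Qed.

Lemma is_series_C_fst (a : nat -> C) l : is_series (K:=C_AbsRing) (V:=C_NormedModule) a l ->
  is_series (fun k => fst (a k)) (fst l) /\ is_series (fun k => snd (a k)) (snd l).
Proof. intros H. unfold is_series in *. pose proof (proj1 (@filterlim_locally nat (NormedModule.UniformSpace C_AbsRing C_NormedModule) eventually _ (sum_n a) l) H) as H'. clear H. rename H' into H. split; apply filterlim_locally; intros eps; specialize (H eps); destruct H as [N HN]; exists N; intros n Hn; destruct (HN n Hn) as [H1 H2].
  - rewrite <- sum_n_fst. exact H1.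
  - rewrite <- sum_n_snd. exact H2. Qed.

Definition alpha (b : nat -> C) phi k := fst (b k) * cos (INR k * phi) - snd (b k) * sin (INR k * phi).
Definition beta (b : nat -> C) phi k := fst (b k) * sin (INR k * phi) + snd (b k) * cos (INR k * phi).

Lemma series_polar (f : C -> C) (b : nat -> C) :
  (forall z : C, in_disc z -> is_pseries (K := C_AbsRing) (V := C_NormedModule) b z (f z)) ->
  forall phi t, Rabs t < 1 ->
  is_series (fun k => alpha b phi k * t ^ k) (fst (f (polar t phi))) /\
  is_series (fun k => beta b phi k * t ^ k) (snd (f (polar t phi))).
Proof.
  intros H phi t Ht. assert (Hd : in_disc (polar t phi)) by (unfold in_disc; rewrite Cmod_polar; auto).
  destruct (is_series_C_fst _ _ (H _ Hd)) as [H1 H2]. split.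
  - eapply is_series_ext; [|exact H1]. intros k. simpl. rewrite pow_polar. unfold polar, alpha. simpl. ring.
  - eapply is_series_ext; [|exact H2]. intros k. simpl. rewrite pow_polar. unfold polar, beta. simpl. ring.
Qed.

Lemma radius_ge (a : nat -> R) : (forall t, Rabs t < 1 -> ex_series (fun k => a k * t ^ k)) ->
  forall rho, Rabs rho < 1 -> Rbar_lt (Rabs rho) (CV_radius a).
Proof.
  intros H rho Hr. set (x := (1 + Rabs rho) / 2).
  assert (Hx : Rabs x < 1). { unfold x. pose proof (Rabs_pos rho). rewrite (Rabs_pos_eq ((1 + Rabs rho) / 2)); lra. }
  pose proof (ex_series_lim_0 _ (H x Hx)) as L.
  assert (Hle : Rbar_le (Rabs x) (CV_radius a)).
  { apply Rbar_not_lt_le. intros C. apply (CV_disk_outside a x C). exact L. }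
  assert (Rabs rho < Rabs x). { unfold x. pose proof (Rabs_pos rho). rewrite (Rabs_pos_eq ((1 + Rabs rho) / 2)); lra. }
  destruct (CV_radius a); simpl in *; auto; lra.
Qed.

Lemma deriv_polar (f : C -> C) l phi rho :
  is_derive (K := C_AbsRing) (V := C_NormedModule) f (polar rho phi) l ->
  is_derive (fun t => fst (f (polar t phi))) rho (fst (Cmult (cos phi, sin phi) l)) /\
  is_derive (fun t => snd (f (polar t phi))) rho (snd (Cmult (cos phi, sin phi) l)).
Proof.
  intros [_ Hd]. specialize (Hd (polar rho phi) (fun P HP => HP)).
  assert (key : forall eps, 0 < eps -> exists delta : posreal, forall h, Rabs h < delta ->
     Cmod (Cminus (Cminus (f (polar (rho + h) phi)) (f (polar rho phi))) (Cmult (polar h phi) l)) <= eps * Rabs h).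
  { intros eps Heps. destruct (Hd (mkposreal eps Heps)) as [delta Hdelta].
    exists delta. intros h Hh.
    assert (E : minus (G:=C_NormedModule) (polar (rho + h) phi) (polar rho phi) = polar h phi).
    { unfold polar. apply injective_projections; simpl; ring. }
    assert (Hb : @ball (AbsRing_UniformSpace C_AbsRing) (polar rho phi) delta (polar (rho + h) phi)).
    { unfold ball; simpl. unfold AbsRing_ball. change (Cmod (minus (G:=C_NormedModule) (polar (rho + h) phi) (polar rho phi)) < delta).
      rewrite E, Cmod_polar. exact Hh. }
    specialize (Hdelta _ Hb). simpl in Hdelta.
    change (Cmod (Cminus (Cminus (f (polar (rho + h) phi)) (f (polar rho phi))) (Cmult (Cminus (polar (rho + h) phi) (polar rho phi)) l)) <= eps * Cmod (Cminus (polar (rho + h) phi) (polar rho phi))) in Hdelta.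
    assert (E' : Cminus (polar (rho + h) phi) (polar rho phi) = polar h phi) by exact E.
    rewrite E', Cmod_polar in Hdelta. exact Hdelta. }
  split; apply is_derive_Reals; intros eps Heps; destruct (key (eps/2) ltac:(lra)) as [delta Hdel];
  exists delta; intros h Hh0 Hh; specialize (Hdel h Hh).
  - pose proof (re_le_Cmod (Cminus (Cminus (f (polar (rho + h) phi)) (f (polar rho phi))) (Cmult (polar h phi) l))) as R1.
    unfold Re in R1. 
    replace ((fst (f (polar (rho + h) phi)) - fst (f (polar rho phi))) / h - fst (Cmult (cos phi, sin phi) l))
      with (fst (Cminus (Cminus (f (polar (rho + h) phi)) (f (polar rho phi))) (Cmult (polar h phi) l)) / h).
    + unfold Rdiv. rewrite Rabs_mult, Rabs_inv. 
      assert (0 < Rabs h) by (apply Rabs_pos_lt; auto).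
      apply (Rmult_lt_reg_r (Rabs h)); auto. rewrite Rmult_assoc, Rinv_l by lra. nra.
    + unfold polar. simpl. field. auto.
  - pose proof (Rmax_Cmod (Cminus (Cminus (f (polar (rho + h) phi)) (f (polar rho phi))) (Cmult (polar h phi) l))) as R0.
    pose proof (Rmax_r (Rabs (fst (Cminus (Cminus (f (polar (rho + h) phi)) (f (polar rho phi))) (Cmult (polar h phi) l))))
                       (Rabs (snd (Cminus (Cminus (f (polar (rho + h) phi)) (f (polar rho phi))) (Cmult (polar h phi) l))))) as R2.
    replace ((snd (f (polar (rho + h) phi)) - snd (f (polar rho phi))) / h - snd (Cmult (cos phi, sin phi) l))
      with (snd (Cminus (Cminus (f (polar (rho + h) phi)) (f (polar rho phi))) (Cmult (polar h phi) l)) / h).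
    + unfold Rdiv. rewrite Rabs_mult, Rabs_inv. 
      assert (0 < Rabs h) by (apply Rabs_pos_lt; auto).
      apply (Rmult_lt_reg_r (Rabs h)); auto. rewrite Rmult_assoc, Rinv_l by lra. nra.
    + unfold polar. simpl. field. auto.
Qed.

Lemma is_series_ext_R (a b : nat -> R) (l : R) : (forall n, a n = b n) -> is_series a l -> is_series b l.
Proof. apply is_series_ext. Qed.

Lemma radius_alpha (f : C -> C) (b : nat -> C) :
  (forall z : C, in_disc z -> is_pseries (K := C_AbsRing) (V := C_NormedModule) b z (f z)) ->
  forall phi rho, Rabs rho < 1 ->
  Rbar_lt (Rabs rho) (CV_radius (alpha b phi)) /\ Rbar_lt (Rabs rho) (CV_radius (beta b phi)).
Proof.
  intros H phi rho Hr. split; apply radius_ge; auto; intros t Ht;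
  destruct (series_polar f b H phi t Ht) as [H1 H2]; eexists; eauto.
Qed.

Lemma radius_fst (f : C -> C) (b : nat -> C) :
  (forall z : C, in_disc z -> is_pseries (K := C_AbsRing) (V := C_NormedModule) b z (f z)) ->
  forall rho, Rabs rho < 1 ->
  Rbar_lt (Rabs rho) (CV_radius (fun k => fst (b k))) /\ Rbar_lt (Rabs rho) (CV_radius (fun k => snd (b k))).
Proof.
  intros H rho Hr. destruct (radius_alpha f b H 0 rho Hr) as [H1 H2].
  split; [rewrite (CV_radius_ext _ (alpha b 0)) | rewrite (CV_radius_ext _ (beta b 0))]; auto;
  intros k; unfold alpha, beta; rewrite Rmult_0_r, cos_0, sin_0; ring.
Qed.

Lemma radial_bound (f : C -> C) (b : nat -> C) :
  (forall z : C, in_disc z -> is_pseries (K := C_AbsRing) (V := C_NormedModule) b z (f z)) ->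
  bloch_norm_le1 f ->
  forall rho, 0 <= rho < 1 -> forall K,
  ssum (fun k => ((INR (S k) * fst (b (S k))) ^2 + (INR (S k) * snd (b (S k))) ^2) * rho^(2*k)) K <= (1 / (1 - rho^2))^2.
Proof.
  intros Hser Hbl rho Hrho K.
  assert (Hr : Rabs rho < 1) by (rewrite Rabs_pos_eq; lra).
  assert (HM : 0 < 1 - rho ^ 2) by nra.
  apply (parseval (fun k => INR (S k) * fst (b (S k))) (fun k => INR (S k) * snd (b (S k)))); [lra| |..].
  { apply Rlt_le. unfold Rdiv. rewrite Rmult_1_l. apply Rinv_0_lt_compat; auto. }
  { destruct (radius_fst f b Hser rho Hr) as [R1 R2].
    rewrite <- CV_radius_derive in R1, R2.
    pose proof (CV_disk_inside _ _ R1) as E1. pose proof (CV_disk_inside _ _ R2) as E2.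
    eapply ex_series_ext; [|exact (ex_series_plus _ _ E1 E2 : ex_series (fun k => Rabs (PS_derive (fun k => fst (b k)) k * rho ^ k) + Rabs (PS_derive (fun k => snd (b k)) k * rho ^ k)))].
    intros k. unfold PS_derive. change (Rabs (INR (S k) * fst (b (S k)) * rho ^ k) + Rabs (INR (S k) * snd (b (S k)) * rho ^ k) = (Rabs (INR (S k) * fst (b (S k))) + Rabs (INR (S k) * snd (b (S k)))) * rho ^ k). assert (Hp : 0 <= rho ^ k) by (apply pow_le; lra). rewrite !(Rabs_mult _ (rho ^ k)), (Rabs_pos_eq (rho ^ k) Hp). ring. }
  intros phi.
  assert (Hz : in_disc (polar rho phi)) by (unfold in_disc; rewrite Cmod_polar; auto).
  destruct (Hbl _ Hz) as (l & Hder & Hbd).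
  destruct (deriv_polar f l phi rho Hder) as [D1 D2].
  destruct (radius_alpha f b Hser phi rho Hr) as [Ra Rb].
  assert (Loc : forall (g : nat -> R) (F : R -> R), (forall t, Rabs t < 1 -> is_series (fun k => g k * t ^ k) (F t)) ->
     locally rho (fun t => F t = PSeries g t)).
  { intros g F Hg. exists (mkposreal (1 - rho) ltac:(lra)). intros t Ht.
    change (Rabs (t + - rho) < 1 - rho) in Ht.
    assert (Rabs t < 1). { apply Rabs_lt_between in Ht. apply Rabs_lt_between. lra. }
    symmetry. unfold PSeries. apply is_series_unique. apply Hg; auto. }
  assert (DA := is_derive_ext_loc _ _ _ _ (Loc (alpha b phi) _ (fun t Ht => proj1 (series_polar f b Hser phi t Ht))) D1).
  assert (DB := is_derive_ext_loc _ _ _ _ (Loc (beta b phi) _ (fun t Ht => proj2 (series_polar f b Hser phi t Ht))) D2).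
  pose proof (is_derive_unique _ _ _ DA) as UA. rewrite (is_derive_unique _ _ _ (is_derive_PSeries _ _ Ra)) in UA.
  pose proof (is_derive_unique _ _ _ DB) as UB. rewrite (is_derive_unique _ _ _ (is_derive_PSeries _ _ Rb)) in UB.
  rewrite <- CV_radius_derive in Ra, Rb.
  pose proof (proj1 (ex_pseries_R _ _) (CV_radius_inside _ _ Ra)) as EA.
  pose proof (proj1 (ex_pseries_R _ _) (CV_radius_inside _ _ Rb)) as EB.
  exists (PSeries (PS_derive (alpha b phi)) rho), (PSeries (PS_derive (beta b phi)) rho). split; [|split].
  - eapply is_series_ext_R; [|apply Series_correct; exact EA]. intros k. unfold PS_derive, alpha. ring.
  - eapply is_series_ext_R; [|apply Series_correct; exact EB]. intros k. unfold PS_derive, beta. ring.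
  - rewrite UA, UB. unfold Cmult. cbn [fst snd].
    assert (Hl : Cmod l <= 1 / (1 - rho ^ 2)).
    { rewrite Cmod_polar, Rabs_pos_eq in Hbd by lra. pose proof (Cmod_ge_0 (f 0%C)).
      apply (Rmult_le_reg_l (1 - rho ^ 2)); auto. field_simplify; nra. }
    pose proof (Cmod_ge_0 l).
    assert (Cmod l ^ 2 = fst l ^ 2 + snd l ^ 2).
    { unfold Cmod. rewrite pow2_sqrt; auto. pose proof (pow2_ge_0 (fst l)). pose proof (pow2_ge_0 (snd l)). lra. }
    pose proof (sin2_cos2 phi). unfold Rsqr in *.
    assert (fst l ^ 2 + snd l ^ 2 <= (1 / (1 - rho ^ 2)) ^ 2).
    { rewrite <- H0. apply pow_incr; lra. }
    replace ((cos phi * fst l - sin phi * snd l) ^ 2 + (cos phi * snd l + sin phi * fst l) ^ 2) with ((sin phi * sin phi + cos phi * cos phi) * (fst l ^ 2 + snd l ^ 2)) by ring.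
    rewrite H1. lra.
Qed.

Lemma is_derive_R_ext (f : R -> R) x l l' : l = l' -> is_derive f x l -> is_derive f x l'.
Proof. intros ->; auto. Qed.

Lemma is_derive_ssum (g : nat -> R -> R) (dg : nat -> R) x n :
  (forall k, is_derive (g k) x (dg k)) -> is_derive (fun y => ssum (fun k => g k y) n) x (ssum dg n).
Proof. intros H. induction n; cbn [ssum].
- apply (is_derive_const (K:=R_AbsRing) (V:=R_NormedModule) 0 x).
- apply (is_derive_plus (K:=R_AbsRing) (V:=R_NormedModule) (fun y => ssum (fun k => g k y) n) (g n)); auto. Qed.

Lemma sum_f_R0_ssum g m : sum_f_R0 g m = ssum g (S m).
Proof. induction m; simpl; [lra|]. rewrite IHm. simpl. lra. Qed.

Lemma pow_le_pow_small t m n : 0 <= t <= 1 -> (m <= n)%nat -> t ^ n <= t ^ m.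
Proof. intros Ht H. induction H; [lra|]. simpl. pose proof (pow_le t m0 ltac:(lra)). nra. Qed.

Lemma part1 (f : C -> C) (b : nat -> C) :
  (forall z : C, in_disc z -> is_pseries (K := C_AbsRing) (V := C_NormedModule) b z (f z)) ->
  bloch_norm_le1 f ->
  forall n : nat, (2 <= n)%nat ->
    sum_f 1 n (fun k => INR k * Cmod (b k) ^ 2) <= Qn n.
Proof.
  intros Hser Hbl n Hn.
  set (c := fun k => (INR (S k)) ^ 2 * (fst (b (S k)) ^ 2 + snd (b (S k)) ^ 2)).
  assert (Hc : forall k, 0 <= c k).
  { intros k. unfold c. pose proof (pow2_ge_0 (fst (b (S k)))). pose proof (pow2_ge_0 (snd (b (S k)))). pose proof (pow2_ge_0 (INR (S k))). nra. }
  assert (HP : forall t, 0 <= t < 1 -> ssum (fun k => c k * t ^ k) n <= 1 / (1 - t) ^ 2).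
  { intros t Ht. pose proof (radial_bound f b Hser Hbl (sqrt t) ltac:(split; [apply sqrt_pos| rewrite <- sqrt_1; apply sqrt_lt_1; lra]) n) as R.
    rewrite pow2_sqrt in R by lra.
    replace (1 / (1 - t) ^ 2) with ((1 / (1 - t)) ^ 2) by (field; lra).
    eapply Rle_trans; [|exact R]. right. apply ssum_ext. intros k _. unfold c.
    rewrite pow_mult, pow2_sqrt by lra. ring. }
  assert (HnR : 2 <= INR n) by (apply (le_INR 2); auto).
  set (t0 := (INR n - 1) / INR n).
  assert (Ht0 : 0 <= t0 < 1). { unfold t0. split. apply Rdiv_le_0_compat; lra. apply (Rmult_lt_reg_r (INR n)); [lra|]. field_simplify; lra. }
  set (H := fun t => t / (1 - t) - ssum (fun k => c k / INR (S k) * t ^ (S k)) n).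
  set (dH := fun t => 1 / (1 - t) ^ 2 - ssum (fun k => c k * t ^ k) n).
  assert (HD : forall t, t < 1 -> is_derive H t (dH t)).
  { intros t Ht. unfold H, dH.
    apply (is_derive_minus (K:=R_AbsRing) (V:=R_NormedModule) (fun t => t / (1 - t)) (fun t => ssum (fun k => c k / INR (S k) * t ^ (S k)) n)).
    - auto_derive; [lra|]. field. lra.
    - apply is_derive_ssum. intros k. eapply is_derive_R_ext; [|apply is_derive_scal; apply is_derive_pow; apply is_derive_id].
      simpl pred. change (c k / INR (S k) * (INR (S k) * 1 * t ^ k) = c k * t ^ k). field. apply not_0_INR. lia. }
  destruct (MVT_gen H 0 t0 dH) as (x & Hx & Hmvt).
  { intros x Hx. apply HD. rewrite Rmin_left, Rmax_right in Hx by lra. lra. }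
  { intros x Hx. rewrite Rmin_left, Rmax_right in Hx by lra. apply derivable_continuous_pt. exists (dH x). apply is_derive_Reals. apply HD. lra. }
  rewrite Rmin_left, Rmax_right in Hx by lra.
  assert (Hdx : 0 <= dH x). { unfold dH. pose proof (HP x ltac:(lra)). lra. }
  assert (H0 : H 0 = 0). { unfold H. rewrite (ssum_ext _ (fun _ => 0)). rewrite ssum_const. field. intros k _. simpl. ring. }
  assert (Ht0pos : 0 <= H t0). { rewrite H0 in Hmvt. nra. }
  unfold H in Ht0pos.
  set (s := ssum (fun k => INR (S k) * (fst (b (S k)) ^ 2 + snd (b (S k)) ^ 2)) n).
  assert (Hs : t0 ^ n * s <= ssum (fun k => c k / INR (S k) * t0 ^ S k) n).
  { unfold s. rewrite <- ssum_scal. apply ssum_le. intros k Hk.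
    replace (c k / INR (S k)) with (INR (S k) * (fst (b (S k)) ^ 2 + snd (b (S k)) ^ 2)) by (unfold c; field; apply not_0_INR; lia).
    assert (t0 ^ n <= t0 ^ S k) by (apply pow_le_pow_small; [lra|lia]).
    assert (0 <= INR (S k) * (fst (b (S k)) ^ 2 + snd (b (S k)) ^ 2)).
    { apply Rmult_le_pos. apply pos_INR. pose proof (pow2_ge_0 (fst (b (S k)))). pose proof (pow2_ge_0 (snd (b (S k)))). lra. }
    nra. }
  assert (Ht0v : t0 / (1 - t0) = INR n - 1). { unfold t0. field. lra. }
  assert (Eq : sum_f 1 n (fun k => INR k * Cmod (b k) ^ 2) = s).
  { unfold sum_f, s. destruct n as [|m]; [lia|]. replace (S m - 1)%nat with m by lia.
    rewrite sum_f_R0_ssum. apply ssum_ext. intros k _. replace (k + 1)%nat with (S k) by lia.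
    unfold Cmod. rewrite pow2_sqrt; auto. pose proof (pow2_ge_0 (fst (b (S k)))). pose proof (pow2_ge_0 (snd (b (S k)))). lra. }
  rewrite Eq.
  assert (Ht0n : 0 < t0 ^ n). { apply pow_lt. unfold t0. apply Rdiv_lt_0_compat; lra. }
  assert (s <= (INR n - 1) / t0 ^ n).
  { apply (Rmult_le_reg_l (t0 ^ n)); auto. field_simplify; [|lra]. lra. }
  eapply Rle_trans; [exact H1|]. right.
  unfold Qn, t0. destruct n as [|m]; [lia|]. replace (S m - 1)%nat with m by lia.
  set (a := INR (S m)) in *. unfold Rdiv. rewrite Rpow_mult_distr, pow_inv.
  change ((a - 1) ^ S m) with ((a - 1) * (a - 1) ^ m).
  assert ((a - 1) ^ m <> 0) by (apply pow_nonzero; lra).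
  assert (a ^ S m <> 0) by (apply pow_nonzero; lra).
  field. lra.
Qed.

Lemma bernoulli x k : -1 <= x -> 1 + INR k * x <= (1 + x) ^ k.
Proof. intros Hx. induction k.
- simpl. lra.
- rewrite S_INR. simpl. pose proof (pos_INR k). assert (0 <= 1 + x) by lra.
  assert (0 <= INR k * x * x) by (pose proof (pow2_ge_0 x); nra). nra. Qed.

Lemma exp_pow x k : exp x ^ k = exp (INR k * x).
Proof. induction k.
- simpl. rewrite Rmult_0_l, exp_0. reflexivity.
- rewrite S_INR. simpl. rewrite IHk, <- exp_plus. f_equal. ring. Qed.

Definition aseq (n : nat) := (INR n / (INR n + 1)) ^ S n.

Lemma aseq_upper n : (1 <= n)%nat -> aseq n <= exp (-1).
Proof.
  intros Hn. unfold aseq. set (N := INR n). assert (HN : 1 <= N) by (apply (le_INR 1); auto).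
  replace (N / (N + 1)) with (1 + (- / (N + 1))) by (field; lra).
  assert (H1 : 1 + - / (N + 1) < exp (- / (N + 1))).
  { apply exp_ineq1. apply Ropp_neq_0_compat. apply Rinv_neq_0_compat. lra. }
  assert (0 <= 1 + - / (N + 1)). { assert (/ (N + 1) <= 1). { rewrite <- Rinv_1. apply Rinv_le_contravar; lra. } lra. }
  eapply Rle_trans. apply pow_incr. split; [auto | left; exact H1].
  rewrite exp_pow. right. f_equal. rewrite S_INR. fold N. field. lra.
Qed.

Lemma aseq_step n : (1 <= n)%nat -> aseq n <= aseq (S n).
Proof.
  intros Hn. unfold aseq. rewrite S_INR. set (N := INR n). assert (HN : 1 <= N) by (apply (le_INR 1); auto).
  set (x := / (N * (N + 2))).
  assert (Hx : 0 < x) by (unfold x; apply Rinv_0_lt_compat; nra).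
  assert (E : (N + 1) / (N + 1 + 1) = N / (N + 1) * (1 + x)) by (unfold x; field; lra).
  assert (Ber := bernoulli x (S n) ltac:(lra)). rewrite S_INR in Ber. fold N in Ber.
  change (((N + 1) / (N + 1 + 1)) ^ S (S n)) with ((N + 1) / (N + 1 + 1) * ((N + 1) / (N + 1 + 1)) ^ S n).
  rewrite E at 2. rewrite Rpow_mult_distr.
  assert (P : 0 <= (N / (N + 1)) ^ S n) by (apply pow_le; apply Rdiv_le_0_compat; lra).
  assert (K : 1 <= (N + 1) / (N + 1 + 1) * (1 + (N + 1) * x)).
  { replace ((N + 1) / (N + 1 + 1) * (1 + (N + 1) * x)) with (1 + / (N * (N + 2) ^ 2)) by (unfold x; field; lra).
    assert (0 < / (N * (N + 2) ^ 2)) by (apply Rinv_0_lt_compat; apply Rmult_lt_0_compat; [lra| apply pow_lt; lra]). lra. }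
  assert (0 <= (N + 1) / (N + 1 + 1)) by (apply Rdiv_le_0_compat; lra).
  assert ((N + 1) / (N + 1 + 1) * (1 + (N + 1) * x) <= (N + 1) / (N + 1 + 1) * (1 + x) ^ S n) by (apply Rmult_le_compat_l; lra).
  nra.
Qed.

Lemma aseq_lower n : (2 <= n)%nat -> 8 / 27 <= aseq n.
Proof.
  intros Hn. induction Hn.
  - unfold aseq. simpl. lra.
  - eapply Rle_trans; [exact IHHn|]. apply aseq_step. lia.
Qed.

Lemma Qn_eq n : (2 <= n)%nat -> Qn n = 4 * aseq n * (INR n * Bn n ^ 2).
Proof.
  intros Hn. unfold Qn, Bn, aseq. set (N := INR n). assert (HN : 2 <= N) by (apply (le_INR 2); auto).
  assert (Hr : 0 < (N + 1) / (N - 1)) by (apply Rdiv_lt_0_compat; lra).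
  replace (((N + 1) / (2 * N) * Rpower ((N + 1) / (N - 1)) ((N - 1) / 2)) ^ 2)
    with (((N + 1) / (2 * N)) ^ 2 * Rpower ((N + 1) / (N - 1)) ((N - 1) / 2 + (N - 1) / 2))
    by (rewrite Rpower_plus; ring).
  replace ((N - 1) / 2 + (N - 1) / 2) with (INR (n - 1)) by (rewrite minus_INR by lia; simpl; fold N; field).
  rewrite Rpower_pow by auto.
  destruct n as [|m]; [lia|]. replace (S m - 1)%nat with m by lia.
  unfold Rdiv. rewrite !Rpow_mult_distr, !pow_inv.
  change ((N - 1) ^ S m) with ((N - 1) * (N - 1) ^ m) in *.
  change ((N + 1) ^ S (S m)) with ((N + 1) * (N + 1) ^ S m).
  change (N ^ S (S m)) with (N * N ^ S m).
  change ((N + 1) ^ S m) with ((N + 1) * (N + 1) ^ m).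
  assert ((N - 1) ^ m <> 0) by (apply pow_nonzero; lra).
  assert ((N + 1) ^ m <> 0) by (apply pow_nonzero; lra).
  field. lra.
Qed.

Lemma part2 n : (2 <= n)%nat -> 32 / 27 * INR n * Bn n ^ 2 <= Qn n /\ Qn n <= 4 / exp 1 * INR n * Bn n ^ 2.
Proof.
  intros Hn. rewrite Qn_eq by auto.
  assert (0 <= INR n * Bn n ^ 2) by (apply Rmult_le_pos; [apply pos_INR | apply pow2_ge_0]).
  pose proof (aseq_lower n Hn). pose proof (aseq_upper n ltac:(lia)).
  assert (E : exp (-1) = / exp 1) by (rewrite <- exp_Ropp; f_equal; ring). rewrite E in H1. unfold Rdiv. split; nra.
Qed.

Theorem proposition4p1 (f : C -> C) (b : nat -> C) :
  b 0%nat = 0%C ->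
  (forall z : C, in_disc z -> is_pseries (K := C_AbsRing) (V := C_NormedModule) b z (f z)) ->
  bloch_norm_le1 f ->
  forall n : nat, (2 <= n)%nat ->
    sum_f 1 n (fun k => INR k * Cmod (b k) ^ 2) <= Qn n /\
    32 / 27 * INR n * Bn n ^ 2 <= Qn n /\
    Qn n <= 4 / exp 1 * INR n * Bn n ^ 2.
Proof.
  intros Hb0 Hser Hbl n Hn. split.
  - apply (part1 f b Hser Hbl n Hn).
  - apply (part2 n Hn).
Qed.
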